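(* Let $k\ge 2$, let $G$ be any finite simple graph, and let $H$ be a finite simple graph admitting a closed neighborhood balanced $k$-coloring $c$ with $|c^{-1}(1)|=|c^{-1}(2)|=\dots=|c^{-1}(k)|$. Then the lexicographic product $G[H]$ admits a closed neighborhood balanced $k$-coloring.
   Context: For a vertex $v$, $N[v]=\{v\}\cup\{u : uv\in E\}$. A closed neighborhood balanced $k$-coloring of a graph is a map $c: V\to\{1,\dots,k\}$ such that for every vertex $v$ the numbers $|\{u\in N[v] : c(u)=i\}|$, $i=1,\dots,k$, are all equal. The lexicographic product $G[H]$ has vertex set $V(G)\times V(H)$, with $(g,h)$ adjacent to $(g',h')$ iff $gg'\in E(G)$, or $g=g'$ and $hh'\in E(H)$. *)

(* Defs.v *)
From mathcomp Require Import all_boot.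
Set Implicit Arguments. Unset Strict Implicit. Unset Printing Implicit Defensive.

Definition simple_graph (V : finType) (e : rel V) : Prop :=
  symmetric e /\ irreflexive e.

Definition closed_nbhd (V : finType) (e : rel V) (v : V) : {set V} :=
  [set u | (u == v) || e v u].

(* Colors {1,...,k} are represented by 'I_k = {0,...,k-1}. *)
Definition cnb_coloring (V : finType) (e : rel V) (k : nat) (c : V -> 'I_k) : Prop :=
  forall (v : V) (i j : 'I_k),
    #|[set u in closed_nbhd e v | c u == i]| = #|[set u in closed_nbhd e v | c u == j]|.

Definition lex_prod (V W : finType) (eG : rel V) (eH : rel W) : rel (V * W) :=
  fun x y => eG x.1 y.1 || ((x.1 == y.1) && eH x.2 y.2).

(* Main.v *)
Require Import Defs.
From mathcomp Require Import all_boot.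

Lemma key (k : nat) (V W : finType) (eG : rel V) (eH : rel W) (c : W -> 'I_k) g h i :
  irreflexive eG ->
  #|[set u in closed_nbhd (lex_prod eG eH) (g, h) | c u.2 == i]| =
  #|[set u in closed_nbhd eH h | c u == i]| + #|[set g' | eG g g']| * #|[set w | c w == i]|.
Proof.
move=> irrG.
have -> : [set u in closed_nbhd (lex_prod eG eH) (g, h) | c u.2 == i] =
  setX [set g] [set u in closed_nbhd eH h | c u == i] :|: setX [set g' | eG g g'] [set w | c w == i].
  apply/setP => -[x y]; rewrite !inE /lex_prod /=.
  rewrite xpair_eqE.
  case: (eqVneq x g) => [->|nx] /=.
    by rewrite irrG /= orbF.
  by rewrite orbF.
rewrite cardsU !cardsX cards1 mul1n.
have -> : setX [set g] [set u in closed_nbhd eH h | c u == i] :&: setX [set g' | eG g g'] [set w | c w == i] = set0.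
  apply/setP => -[x y]; rewrite !inE /=.
  by case: (eqVneq x g) => [->|] //=; rewrite irrG andbF.
by rewrite cards0 subn0.
Qed.

Theorem theorem2p20 (k : nat) (V W : finType) (eG : rel V) (eH : rel W)
    (c : W -> 'I_k) :
  2 <= k ->
  simple_graph eG ->
  simple_graph eH ->
  cnb_coloring eH c ->
  (forall i j : 'I_k, #|[set w | c w == i]| = #|[set w | c w == j]|) ->
  exists c' : V * W -> 'I_k, cnb_coloring (lex_prod eG eH) c'.
Proof.
move=> _ [_ irrG] _ cH eq.
exists (fun u => c u.2) => -[g h] i j.
by rewrite !key // (cH h i j) (eq i j).
Qed.
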